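(* Let $\Xi\subseteq L^0(\mathbb{R}^d,\mathcal{F})$ be infinitely $\mathcal{F}$-decomposable, and let $\Gamma$ be an $\mathcal{F}$-measurable random set such that $\Gamma(\omega)$ is open and non-empty for almost all $\omega$. Then $$L^0(\Gamma,\mathcal{F})+\Xi=L^0(\Gamma,\mathcal{F})+\mathrm{cl}_0\,\Xi,$$ where the sums are elementwise (Minkowski) sums of families of random vectors.
   Context: $(\Omega,\mathcal{F},\mathbb{P})$ is a complete probability space. A map $\Gamma$ from $\Omega$ to subsets of $\mathbb{R}^d$ is an $\mathcal{F}$-measurable random set if its graph $\{(\omega,x):x\in\Gamma(\omega)\}$ belongs to $\mathcal{F}\otimes\mathcal{B}(\mathbb{R}^d)$. $L^0(\Gamma,\mathcal{F})$ is the family of $\mathcal{F}$-measurable random vectors $\xi$ with $\xi\in\Gamma$ a.s. (selections); $L^0(\mathbb{R}^d,\mathcal{F})$ is the family of all $\mathcal{F}$-measurable random vectors, identified up to a.s. equality. $\mathrm{cl}_0$ denotes closure with respect to convergence in probability. A family $\Xi\subseteq L^0(\mathbb{R}^d,\mathcal{F})$ is infinitely $\mathcal{F}$-decomposable if $\sum_n \xi_n\mathbf{1}_{A_n}\in\Xi$ for every sequence $(\xi_n)_{n\ge1}$ in $\Xi$ and every countable $\mathcal{F}$-measurable partition $(A_n)_{n\ge1}$ of $\Omega$. *)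

(* Defs.v *)
From HB Require Import structures.
From mathcomp Require Import all_boot all_order all_algebra.
From mathcomp Require Import all_classical all_reals all_analysis.
Set Implicit Arguments. Unset Strict Implicit. Unset Printing Implicit Defensive.
Import Order.TTheory GRing.Theory Num.Theory.
Import numFieldNormedType.Exports.
Local Open Scope classical_set_scope.
Local Open Scope ring_scope.

Section L0.
Context {dO : measure_display} {Omega : measurableType dO} {R : realType}.
Context (P : probability Omega R) (d : nat).

(* random vectors in R^d are maps Omega -> 'rV[R]_d;  F-measurability is
   measurability of each coordinate (Borel sigma-algebra of R^d is the
   product of the Borel sigma-algebras of R). *)
Definition rvec_meas (xi : Omega -> 'rV[R]_d) : Prop :=
  forall i : 'I_d, measurable_fun setT (fun w => xi w ord0 i).

Definition ae_eq (xi eta : Omega -> 'rV[R]_d) : Prop :=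
  {ae P, forall w, xi w = eta w}.

Definition ae_in (Xi : set (Omega -> 'rV[R]_d)) (eta : Omega -> 'rV[R]_d) : Prop :=
  exists2 xi, Xi xi & ae_eq xi eta.

Definition L0_family (Xi : set (Omega -> 'rV[R]_d)) : Prop :=
  forall xi, Xi xi -> rvec_meas xi.

Definition meas_rectangles : set (set (Omega * 'rV[R]_d)) :=
  [set C | exists A : set Omega, exists B : 'I_d -> set R,
     [/\ measurable A, (forall i, measurable (B i)) &
         C = A `*` [set x : 'rV[R]_d | forall i, B i (x ord0 i)]]].

(* F-measurable random set: its graph lies in F (x) B(R^d) *)
Definition random_set_meas (Gamma : Omega -> set 'rV[R]_d) : Prop :=
  <<s meas_rectangles >> [set p : Omega * 'rV[R]_d | Gamma p.1 p.2].

Definition L0_sel (Gamma : Omega -> set 'rV[R]_d) : set (Omega -> 'rV[R]_d) :=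
  [set xi | rvec_meas xi /\ {ae P, forall w, Gamma w (xi w)}].

Definition meas_partition (A : nat -> set Omega) : Prop :=
  [/\ forall n, measurable (A n),
      forall n m, n <> m -> A n `&` A m = set0 &
      \bigcup_n A n = setT].

(* infinite F-decomposability (up to a.s. equality): sum_n xi_n 1_{A_n} is in Xi *)
Definition inf_decomposable (Xi : set (Omega -> 'rV[R]_d)) : Prop :=
  forall (xi : nat -> Omega -> 'rV[R]_d) (A : nat -> set Omega),
    (forall n, Xi (xi n)) -> meas_partition A ->
    ae_in Xi (fun w => xi (xget 0%N [set n | A n w]) w).

Definition cvg_in_prob (u : nat -> Omega -> 'rV[R]_d) (xi : Omega -> 'rV[R]_d) : Prop :=
  forall e : R, 0 < e ->
    (fun n => P [set w | e < `|u n w - xi w|]) @ \oo --> 0%E.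

Definition cl0 (Xi : set (Omega -> 'rV[R]_d)) : set (Omega -> 'rV[R]_d) :=
  [set xi | rvec_meas xi /\
     exists u : nat -> Omega -> 'rV[R]_d, (forall n, Xi (u n)) /\ cvg_in_prob u xi].

Definition fam_sum (X Y : set (Omega -> 'rV[R]_d)) : set (Omega -> 'rV[R]_d) :=
  [set eta | exists2 x, X x & exists2 y, Y y & eta = (fun w => x w + y w)].

End L0.

(* Main.v *)
Require Import Defs.
From mathcomp Require Import all_boot all_order all_algebra.
From mathcomp Require Import all_classical all_reals all_analysis.
From mathcomp Require Import measurable_realfun.
Import Order.TTheory GRing.Theory Num.Theory.
Import numFieldNormedType.Exports.
Set Implicit Arguments. Unset Strict Implicit.
Local Open Scope classical_set_scope.
Local Open Scope ring_scope.

Lemma graph_meas (dO : measure_display) (Omega : measurableType dO)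
  (R : realType) (d : nat) (z : Omega -> 'rV[R]_d) :
  (forall i : 'I_d, measurable_fun setT (fun w => z w ord0 i)) ->
  forall C, <<s @meas_rectangles dO Omega R d >> C ->
  measurable [set w | C (w, z w)].
Proof.
move=> hz C; apply: (@smallest_sub _ _ _ [set C | measurable [set w | C (w, z w)]]).
- split.
  + exact: measurable0.
  + move=> A /= mA.
    have -> : [set w | (setT `\` A) (w, z w)] = ~` [set w | A (w, z w)].
      by apply/seteqP; split => w /=; [case|].
    exact: measurableC.
  + by move=> F mF; exact: bigcupT_measurable.
- move=> _ [A [B [mA mB ->]]] /=.
  set F := fun k : nat => match @insub nat (fun k => (k < d)%N) 'I_d k with
    | Some i => (fun w => z w ord0 i) @^-1` B i | None => setT end.
  have -> : [set w | (A `*` [set x : 'rV[R]_d | forall i, B i (x ord0 i)]) (w, z w)]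
      = A `&` \bigcap_k F k.
    apply/seteqP; split => w /=.
      move=> [Aw Bw]; split => // k _; rewrite /F.
      by case: insubP => // i _ _; exact: Bw.
    move=> [Aw Fw]; split => // i; have := Fw (val i) I; rewrite /F valK.
    by [].
  apply: measurableI => //; apply: bigcapT_measurable => k; rewrite /F.
  case: insubP => // i _ _; rewrite -[X in measurable X]setTI.
  have := hz i measurableT _ (mB i). by [].
Qed.

Lemma norm_meas (dO : measure_display) (Omega : measurableType dO)
  (R : realType) (d : nat) (z : Omega -> 'rV[R]_d) :
  (forall i : 'I_d, measurable_fun setT (fun w => z w ord0 i)) ->
  measurable_fun setT (fun w => `|z w|).
Proof.
move=> hz.
have -> : (fun w => `|z w|) =
   (fun w => \big[Num.max/0]_(ij <- index_enum ('I_1 * 'I_d)%type) `|z w ij.1 ij.2|).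
  by apply/funext => w; rewrite [LHS]/Num.Def.normr /= mx_normrE.
elim: (index_enum _) => [|ij s IH].
  by under eq_fun do rewrite big_nil; exact: measurable_cst.
under eq_fun do rewrite big_cons.
apply: measurable_maxr => //.
apply: measurableT_comp; first exact: normr_measurable.
by rewrite (ord1 ij.1); exact: hz.
Qed.

Lemma gt_meas (dO : measure_display) (Omega : measurableType dO)
  (R : realType) (f : Omega -> R) (e : R) :
  measurable_fun setT f -> measurable [set w | e < f w].
Proof.
move=> hf; have := hf measurableT _ (measurable_itv `]e, +oo[).
rewrite setTI; congr measurable; apply/seteqP; split => w /=;
  by rewrite in_itv /= andbT.
Qed.

Lemma rmD (dO : measure_display) (Omega : measurableType dO)
  (R : realType) (d : nat) (f g : Omega -> 'rV[R]_d) :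
  rvec_meas f -> rvec_meas g -> rvec_meas (fun w => f w + g w).
Proof.
move=> mf mg i.
rewrite (_ : (fun w => _) = (fun w => f w ord0 i + g w ord0 i)).
  exact: measurable_funD.
by apply/funext => w; rewrite !mxE.
Qed.

Lemma rmB (dO : measure_display) (Omega : measurableType dO)
  (R : realType) (d : nat) (f g : Omega -> 'rV[R]_d) :
  rvec_meas f -> rvec_meas g -> rvec_meas (fun w => f w - g w).
Proof.
move=> mf mg i.
rewrite (_ : (fun w => _) = (fun w => f w ord0 i - g w ord0 i)).
  exact: measurable_funB.
by apply/funext => w; rewrite !mxE.
Qed.

Theorem proposition2p3 (dO : measure_display) (Omega : measurableType dO)
  (R : realType) (P : probability Omega R) (d : nat)
  (Xi : set (Omega -> 'rV[R]_d)) (Gamma : Omega -> set 'rV[R]_d) :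
  measure_is_complete P ->
  L0_family Xi ->
  inf_decomposable P Xi ->
  random_set_meas Gamma ->
  {ae P, forall w, open (Gamma w) /\ Gamma w !=set0} ->
  forall eta : Omega -> 'rV[R]_d,
    ae_in P (fam_sum (L0_sel P Gamma) Xi) eta <->
    ae_in P (fam_sum (L0_sel P Gamma) (cl0 P Xi)) eta.
Proof.
move=> _ HL Hdec HG Hopen eta; split.
  case=> _ [x Hx [y Hy ->]] Heq; exists (fun w => x w + y w) => //.
  exists x => //; exists y => //; split; first exact: HL.
  exists (fun=> y); split => // e e0.
  have -> : (fun n : nat => P [set w | e < `|y w - y w|]) = fun=> 0%E.
    apply/funext => n; rewrite (_ : [set w | _] = set0) ?measure0 //.
    by apply/seteqP; split => w //=; rewrite subrr normr0 ltNge (ltW e0).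
  exact: cvg_cst.
case=> _ [x [xm xG] [y [ym [u [uX uc]]]] ->] Heq.
pose S n := [set w | Gamma w (x w + y w - u n w)].
have mS n : measurable (S n).
  exact: (graph_meas (rmB (rmD xm ym) (HL _ (uX n))) HG).
have key : {ae P, forall w, exists n, S n w}.
  pose E k n := [set w | k.+1%:R^-1 < `|u n w - y w|].
  pose C k := \bigcap_n E k n.
  have mE k n : measurable (E k n).
    by apply: gt_meas; apply: norm_meas; exact: (rmB (HL _ (uX n)) ym).
  have mC k : measurable (C k) by apply: bigcapT_measurable => n; exact: mE.
  have C0 k : P (C k) = 0%E.
    apply/le_anti/andP; split; last exact: measure_ge0.
    have ek : 0 < k.+1%:R^-1 :> R by rewrite invr_gt0.
    rewrite -(cvg_lim _ (uc _ ek)) //.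
    apply: lime_ge; first exact: cvgP (uc _ ek).
    near=> n; apply: le_measure; rewrite ?inE; [exact: mC|exact: mE|].
    by move=> w Cw; exact: Cw n I.
  have negC : P.-negligible (\bigcup_k C k).
    by apply: negligible_bigcup => k; exact: (negligibleP _ (mC k)).2 (C0 k).
  have nC : {ae P, forall w, ~ (\bigcup_k C k) w}.
    by apply: negligibleS negC => w /= /contrapT.
  apply: filterS3 Hopen xG nC => w [hop _] hx hnC.
  have : nbhs (x w) (Gamma w) by apply: open_nbhs_nbhs; split.
  case/nbhs_ballP => e e0 he.
  have [k hk] : exists k : nat, k.+1%:R^-1 < e.
    case: (near_infty_natSinv_lt (PosNum e0)) => N _ hN; exists N; by apply: hN => /=.
  have hCk : ~ C k w by move=> Ck; apply: hnC; exists k.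
  have [n hn] : exists n, ~ E k n w.
    by apply: contrapT => h; apply: hCk => n _; apply: contrapT => hn; apply: h; exists n.
  exists n; apply: he; rewrite -ball_normE /ball_ /=.
  move/negP: hn; rewrite -leNgt => hn.
  rewrite (_ : x w - (x w + y w - u n w) = u n w - y w); first exact: le_lt_trans hk.
  by rewrite opprB addrCA opprD addNKr.
pose L := ~` \bigcup_n S n.
pose A n := if n is 0 then S 0%N `|` L
            else S n `\` \bigcup_(m in [set m | (m < n)%N]) S m.
have hA1 n w : A n w -> S n w \/ L w.
  by case: n => [|n] /= [] ? //; [left|right|left].
have hA2 n w : (0 < n)%N -> A n w -> S n w /\ forall k, (k < n)%N -> ~ S k w.
  case: n => [//|n] _ /= [Sn hn]; split => // k kn Sk; apply: hn; by exists k.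
have hAS n w : A n w -> (exists m, S m w) -> S n w.
  move=> /hA1 [//|Lw] [m Sm]; exfalso; apply: Lw; by exists m.
have huniq n m w : A n w -> A m w -> n = m.
  have h n' m' : (n' < m')%N -> A n' w -> A m' w -> False.
    move=> nm An Am; have [Sm hm] := hA2 m' w (leq_ltn_trans (leq0n _) nm) Am.
    case: (hA1 _ _ An) => [Sn|Lw]; first exact: hm _ nm Sn.
    by apply: Lw; exists m'.
  move=> An Am; case: (ltngtP n m) => // nm; [exfalso; exact: h An Am|].
  by exfalso; exact: h Am An.
have cover w : exists n, A n w.
  case: (pselect (L w)) => [Lw|nLw]; first by exists 0%N; right.
  have [n _ Sn] : (\bigcup_n S n) w by apply: contrapT.
  elim/ltn_ind: n Sn => n IH Sn.
  case: (pselect (exists k, (k < n)%N /\ S k w)) => [[k [kn Sk]]|nk].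
    exact: IH k kn Sk.
  exists n; case: n {IH} Sn nk => [|n] Sn nk; first by left.
  by split => // -[k /= kn Sk]; apply: nk; exists k.
have part : meas_partition A.
  split.
  - case => [|n] /=.
      by apply: measurableU; [exact: mS|apply: measurableC; exact: bigcupT_measurable].
    by apply: measurableD; [exact: mS|apply: bigcup_measurable => k _; exact: mS].
  - move=> n m nm; apply/seteqP; split => w // [An Am]; exact: nm (huniq _ _ _ An Am).
  - by apply/seteqP; split => w // _; have [n An] := cover w; exists n.
have [y'' Hy'' Hae] := Hdec u A uX part.
exists (fun w => x w + y w); last exact: Heq.
exists (fun w => x w + y w - y'' w); last first.
  by exists y'' => //; apply/funext => w; rewrite subrK.
split; first exact: rmB (rmD xm ym) (HL _ Hy'').
apply: filterS2 key Hae => w [n Sn] ->.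
have Am : A (xget 0%N [set n | A n w]) w by have [m Am] := cover w; exact: (@xgetPex _ 0%N [set n | A n w] (ex_intro _ m Am)).
exact: hAS _ _ Am (ex_intro _ n Sn).
Unshelve. all: by end_near.
Qed.
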